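(* Let $\Upsilon$ be a tree and let $\|\cdot\|$ be an equivalent strictly convex norm on $C_0(\Upsilon)$, with associated function $\mu(t)=\inf\{\|\mathbf{1}_{(0,t]}+f'\|: f'\in C_0(\Upsilon),\ \operatorname{supp}f'\subseteq(t,\infty)\}$. Then for every $s\in\Upsilon$ there is at most one point $t$ which is bad for $\mu$ and satisfies $s\preceq t$ and $\mu(t)=\mu(s)$. In particular, $\mu$ is strictly increasing on the set of its bad points.
   Context: A tree is a partially ordered set $(\Upsilon,\preceq)$ such that for each $t$ the set $(0,t]=\{s:s\preceq t\}$ is well-ordered; write $(0,t)=\{s:s\prec t\}$, $(t,\infty)=\{u:t\prec u\}$, and let $r(t)$ be the order type of $(0,t)$. Trees are assumed Hausdorff: if $r(t)$ is a limit ordinal and $(0,t)=(0,t')$ then $t=t'$. $\Upsilon$ carries the coarsest topology in which every $(0,t]$ is open and closed, and $C_0(\Upsilon)$ is the space of continuous $f:\Upsilon\to\mathbb{R}$ with $\{|f|\ge\epsilon\}$ compact for every $\epsilon>0$, with the supremum norm; $\operatorname{supp}f=\{s:f(s)\ne0\}$. The set $t^+$ of immediate successors of $t$ consists of those $u$ with $(0,u)=(0,t]$. The function $\mu$ is increasing. For increasing $\rho$, $t$ is good for $\rho$ if there is a finite $F\subseteq t^+$ with $\inf_{u\in t^+\setminus F}\rho(u)>\rho(t)$ (infimum over the empty set $=+\infty$); otherwise bad. A norm is strictly convex if $\|x\|=\|y\|=\tfrac12\|x+y\|$ implies $x=y$. *)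

(* Defs.v *)
From Stdlib Require Import Reals Lra List Classical ClassicalDescription.
From Stdlib Require Import Rtopology.
Open Scope R_scope.
Set Implicit Arguments.

Section Trees.
Variable T : Type.
Variable le : T -> T -> Prop.

Definition lt (s t : T) : Prop := le s t /\ s <> t.

Definition well_ordered_below (t : T) : Prop :=
  forall A : T -> Prop, (forall x, A x -> le x t) -> (exists x, A x) ->
    exists m, A m /\ forall x, A x -> le m x.

(* r(t), the order type of (0,t), is a limit ordinal:
   (0,t) is nonempty and has no largest element *)
Definition limit_height (t : T) : Prop :=
  (exists s, lt s t) /\ ~ (exists m, lt m t /\ forall s, lt s t -> le s m).

Definition is_tree : Prop :=
  (forall x, le x x) /\
  (forall x y, le x y -> le y x -> x = y) /\
  (forall x y z, le x y -> le y z -> le x z) /\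
  (forall t, well_ordered_below t).

Definition hausdorff_tree : Prop :=
  forall t t', limit_height t -> (forall s, lt s t <-> lt s t') -> t = t'.

(* immediate successors: u ∈ t^+  iff (0,u) = (0,t] *)
Definition succ (t u : T) : Prop := forall x, lt x u <-> le x t.

(* The topology: coarsest one in which every (0,t] is open and closed.
   Subbasic sets are (0,t] (flag true) and its complement (flag false);
   a point satisfies a finite list of subbasic conditions if it lies in the
   corresponding finite intersection. *)
Definition sat (x : T) (p : T * bool) : Prop :=
  if snd p then le x (fst p) else ~ le x (fst p).

Definition topen (U : T -> Prop) : Prop :=
  forall x, U x -> exists l : list (T * bool),
    Forall (sat x) l /\ forall y, Forall (sat y) l -> U y.

Definition tcompact (K : T -> Prop) : Prop :=
  forall (I : Type) (U : I -> T -> Prop),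
    (forall i, topen (U i)) -> (forall x, K x -> exists i, U i x) ->
    exists l : list I, forall x, K x -> exists i, In i l /\ U i x.

Definition tcontinuous (f : T -> R) : Prop :=
  forall V : R -> Prop, open_set V -> topen (fun x => V (f x)).

Definition C0 (f : T -> R) : Prop :=
  tcontinuous f /\ forall eps, 0 < eps -> tcompact (fun x => Rabs (f x) >= eps).

Definition is_norm_C0 (N : (T -> R) -> R) : Prop :=
  (forall f, C0 f -> 0 <= N f) /\
  (forall f, C0 f -> N f = 0 -> forall x, f x = 0) /\
  (forall c f, C0 f -> N (fun x => c * f x) = Rabs c * N f) /\
  (forall f g, C0 f -> C0 g -> N (fun x => f x + g x) <= N f + N g).

Definition equiv_sup_norm (N : (T -> R) -> R) : Prop :=
  exists a b, 0 < a /\ 0 < b /\ forall f, C0 f ->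
    (forall t, a * Rabs (f t) <= N f) /\
    (forall M, (forall t, Rabs (f t) <= M) -> N f <= b * M).

Definition strictly_convex (N : (T -> R) -> R) : Prop :=
  forall f g, C0 f -> C0 g -> N f = N g -> N f = / 2 * N (fun x => f x + g x) ->
    forall x, f x = g x.

Definition ind (t : T) : T -> R :=
  fun x => if excluded_middle_informative (le x t) then 1 else 0.

Definition is_inf (E : R -> Prop) (m : R) : Prop :=
  (forall r, E r -> m <= r) /\ (forall m', (forall r, E r -> m' <= r) -> m' <= m).

Definition mu_set (N : (T -> R) -> R) (t : T) : R -> Prop :=
  fun r => exists g, C0 g /\ (forall x, g x <> 0 -> lt t x) /\
                     r = N (fun x => ind t x + g x).

(* t is good for rho: there is a finite F ⊆ t^+ with
   inf_{u ∈ t^+ \ F} rho u > rho t  (inf ∅ = +∞), i.e. some c > rho t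
   bounds rho from below on t^+ \ F *)
Definition good (rho : T -> R) (t : T) : Prop :=
  exists F : list T, Forall (succ t) F /\
    exists c, rho t < c /\ forall u, succ t u -> ~ In u F -> c <= rho u.

Definition bad (rho : T -> R) (t : T) : Prop := ~ good rho t.

End Trees.

(* Main.v *)
Require Import Defs.
From Stdlib Require Import Reals Lra List Classical ClassicalDescription Rtopology FunctionalExtensionality.
Import Defs.
Open Scope R_scope.

Definition pcont {T} (le : T -> T -> Prop) (f : T -> R) : Prop :=
  forall x eps, 0 < eps -> exists l : list (T * bool),
    Forall (sat le x) l /\ forall y, Forall (sat le y) l -> Rabs (f y - f x) < eps.

Lemma pcont_of {T} (le : T -> T -> Prop) f : tcontinuous le f -> pcont le f.
Proof.
  intros Hc x eps He.
  destruct (Hc (disc (f x) (mkposreal eps He)) (disc_P1 _ _) x) as [l [H1 H2]].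
  { unfold disc; simpl. rewrite Rminus_diag, Rabs_R0; auto. }
  exists l; split; auto.
Qed.

Lemma of_pcont {T} (le : T -> T -> Prop) f : pcont le f -> tcontinuous le f.
Proof.
  intros Hc V HV x Hx.
  destruct (HV _ Hx) as [d Hd].
  destruct (Hc x d (cond_pos d)) as [l [H1 H2]].
  exists l; split; auto.
  intros y Hy. apply Hd. unfold disc. apply H2; auto.
Qed.

Lemma pcont_open_lt {T} (le : T -> T -> Prop) f eps :
  pcont le f -> topen le (fun x => Rabs (f x) < eps).
Proof.
  intros Hc x Hx.
  destruct (Hc x (eps - Rabs (f x))) as [l [H1 H2]]. lra.
  exists l; split; auto. intros y Hy. specialize (H2 y Hy).
  pose proof (Rabs_triang_inv (f y) (f x)). lra.
Qed.

Lemma compact_sub {T} (le : T -> T -> Prop) (K K1 K2 : T -> Prop) :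
  tcompact le K1 -> tcompact le K2 -> (forall x, K x -> K1 x \/ K2 x) ->
  topen le (fun x => ~ K x) -> tcompact le K.
Proof.
  intros C1 C2 Hs Ho I U HU Hcov.
  set (U' := fun (o : option I) x => match o with Some i => U i x | None => ~ K x end).
  assert (HU' : forall o, topen le (U' o)) by (unfold U'; intros [i|]; [apply HU | exact Ho]).
  assert (Hcov' : forall x, exists o, U' o x).
  { intros x. destruct (classic (K x)) as [k|k].
    - destruct (Hcov x k) as [i Hi]. exists (Some i); exact Hi.
    - exists None; exact k. }
  destruct (C1 _ U' HU' (fun x _ => Hcov' x)) as [l1 Hl1].
  destruct (C2 _ U' HU' (fun x _ => Hcov' x)) as [l2 Hl2].
  exists (flat_map (fun o => match o with Some i => i :: nil | None => nil end) (l1 ++ l2)).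
  intros x Kx.
  assert (E : exists o, In o (l1 ++ l2) /\ U' o x).
  { destruct (Hs x Kx) as [h|h].
    - destruct (Hl1 x h) as [o [Hoa Hob]]. exists o; split; auto. apply in_or_app; auto.
    - destruct (Hl2 x h) as [o [Hoa Hob]]. exists o; split; auto. apply in_or_app; auto. }
  destruct E as [[i|] [Hi1 Hi2]].
  - exists i; split; auto. apply in_flat_map. exists (Some i); simpl; auto.
  - simpl in Hi2. contradiction.
Qed.

Lemma C0_plus {T} (le : T -> T -> Prop) f g : C0 le f -> C0 le g -> C0 le (fun x => f x + g x).
Proof.
  intros [Cf Kf] [Cg Kg].
  apply pcont_of in Cf. apply pcont_of in Cg.
  assert (Cs : pcont le (fun x => f x + g x)).
  { intros x eps He.
    destruct (Cf x (eps/2)) as [l1 [A1 B1]]; [lra|].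
    destruct (Cg x (eps/2)) as [l2 [A2 B2]]; [lra|].
    exists (l1 ++ l2); split. apply Forall_app; auto.
    intros y Hy. apply Forall_app in Hy. destruct Hy as [Y1 Y2].
    specialize (B1 y Y1). specialize (B2 y Y2).
    replace (f y + g y - (f x + g x)) with ((f y - f x) + (g y - g x)) by ring.
    pose proof (Rabs_triang (f y - f x) (g y - g x)). lra. }
  split. apply of_pcont; auto.
  intros eps He.
  apply (compact_sub le _ _ _ (Kf (eps/2) ltac:(lra)) (Kg (eps/2) ltac:(lra))).
  - intros x Hx. destruct (Rle_lt_dec (eps/2) (Rabs (f x))) as [h|h]; [left; lra|].
    destruct (Rle_lt_dec (eps/2) (Rabs (g x))) as [h'|h']; [right; lra|].
    pose proof (Rabs_triang (f x) (g x)). lra.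
  - intros x Hx. destruct (pcont_open_lt le _ eps Cs x) as [l [A B]].
    + apply Rnot_ge_lt; auto.
    + exists l; split; auto. intros y Hy. specialize (B y Hy). lra.
Qed.

Lemma C0_scal {T} (le : T -> T -> Prop) c f : C0 le f -> C0 le (fun x => c * f x).
Proof.
  intros [Cf Kf]. apply pcont_of in Cf.
  assert (Cs : pcont le (fun x => c * f x)).
  { intros x eps He.
    destruct (Cf x (eps / (Rabs c + 1))) as [l [A B]].
    { apply Rdiv_lt_0_compat; auto. pose proof (Rabs_pos c); lra. }
    exists l; split; auto. intros y Hy. specialize (B y Hy).
    replace (c * f y - c * f x) with (c * (f y - f x)) by ring.
    rewrite Rabs_mult.
    assert (Hp : 0 < Rabs c + 1) by (pose proof (Rabs_pos c); lra).
    apply Rle_lt_trans with ((Rabs c + 1) * Rabs (f y - f x)).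
    { apply Rmult_le_compat_r. apply Rabs_pos. lra. }
    apply Rmult_lt_reg_l with (/ (Rabs c + 1)). apply Rinv_0_lt_compat; auto.
    rewrite <- Rmult_assoc, Rinv_l by lra. unfold Rdiv in B. lra. }
  split. apply of_pcont; auto.
  intros eps He.
  assert (Hp : 0 < Rabs c + 1) by (pose proof (Rabs_pos c); lra).
  apply (compact_sub le _ _ _ (Kf (eps / (Rabs c + 1)) ltac:(apply Rdiv_lt_0_compat; lra))
                              (Kf (eps / (Rabs c + 1)) ltac:(apply Rdiv_lt_0_compat; lra))).
  - intros x Hx. left. rewrite Rabs_mult in Hx.
    apply Rle_ge. apply Rmult_le_reg_l with (Rabs c + 1); auto.
    unfold Rdiv. rewrite <- Rmult_assoc, Rmult_comm with (r1 := Rabs c + 1), Rmult_assoc, Rinv_r by lra.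
    pose proof (Rabs_pos (f x)). pose proof (Rabs_pos c). nra.
  - intros x Hx. destruct (pcont_open_lt le _ eps Cs x) as [l [A B]].
    + apply Rnot_ge_lt; auto.
    + exists l; split; auto. intros y Hy. specialize (B y Hy). lra.
Qed.

Lemma C0_zero {T} (le : T -> T -> Prop) : C0 le (fun _ => 0).
Proof.
  split.
  - apply of_pcont. intros x eps He. exists nil; split; auto.
    intros; rewrite Rminus_diag, Rabs_R0; auto.
  - intros eps He I U _ _. exists nil. intros x Hx. rewrite Rabs_R0 in Hx. lra.
Qed.

Lemma wo_min {T} (le : T -> T -> Prop) (Ht : is_tree le) t (A : T -> Prop) :
  (forall x, A x -> le x t) -> A t \/ (exists x, A x) -> exists m, A m /\ forall x, A x -> le m x.
Proof.
  destruct Ht as [_ [_ [_ W]]]. intros H1 H2. apply (W t A H1).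
  destruct H2 as [h|h]; [exists t; auto | exact h].
Qed.

Lemma comparable {T} (le : T -> T -> Prop) (Ht : is_tree le) x y t :
  le x t -> le y t -> le x y \/ le y x.
Proof.
  intros Hx Hy.
  destruct (wo_min le Ht t (fun z => z = x \/ z = y)) as [m [[E|E] Hm]].
  - intros z [->| ->]; auto.
  - right; exists x; auto.
  - subst; left; apply Hm; auto.
  - subst; right; apply Hm; auto.
Qed.

Lemma segment {T} (le : T -> T -> Prop) (Ht : is_tree le) (Hh : hausdorff_tree le) x0 q :
  ~ le x0 q -> (forall y, le y x0 -> ~ le y q) \/
               exists z, lt le z x0 /\ forall y, le y x0 -> le y q -> le y z.
Proof.
  intros Hq. pose proof Ht as [Rf [As [Tr _]]].
  destruct (wo_min le Ht x0 (fun y => le y x0 /\ ~ le y q)) as [m [[Hm1 Hm2] Hm]].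
  { intros x [h _]; auto. } { left; auto. }
  assert (Key : forall y, le y x0 -> (le y q <-> lt le y m)).
  { intros y Hy; split.
    - intros Hyq. destruct (comparable le Ht y m x0 Hy Hm1) as [h|h].
      + split; auto. intros ->; auto.
      + exfalso; apply Hm2; eauto.
    - intros [h1 h2]. apply NNPP; intro C. apply h2. apply As; [exact h1 | apply Hm; split; auto]. }
  destruct (classic (exists s, lt le s m)) as [[s0 Hs0]|NE].
  2:{ left. intros y Hy Hyq. apply NE. exists y. apply Key; auto. }
  destruct (classic (exists z, lt le z m /\ forall s, lt le s m -> le s z)) as [[z [Hz1 Hz2]]|NM].
  - right. exists z. assert (Hzx : le z x0) by (eapply Tr; [apply Hz1|auto]).
    split.
    + split; auto. intros ->. apply Hq. apply Key; auto.
    + intros y Hy Hyq. apply Hz2. apply Key; auto.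
  - exfalso.
    destruct (classic (le q x0)) as [Hqx|Hqx].
    { apply NM. exists q. split. apply Key; auto.
      intros s Hs. apply Key; auto. eapply Tr; [apply Hs|auto]. }
    destruct (wo_min le Ht q (fun y => le y q /\ ~ le y x0)) as [m' [[Hm1' Hm2'] Hm']].
    { intros x [h _]; auto. } { left; auto. }
    assert (E : m = m').
    { apply Hh. split; [exists s0; auto | exact NM].
      intros s; split.
      - intros Hs. assert (Hsx : le s x0) by (eapply Tr; [apply Hs|auto]).
        assert (Hsq : le s q) by (apply Key; auto).
        destruct (comparable le Ht s m' q Hsq Hm1') as [h|h].
        + split; auto. intros ->; auto.
        + exfalso; apply Hm2'; eauto.
      - intros [Hs1 Hs2]. assert (Hsq : le s q) by eauto.
        destruct (classic (le s x0)) as [h|h].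
        + apply Key; auto.
        + exfalso. apply Hs2. apply As; [exact Hs1 | apply Hm'; split; auto]. }
    subst m'. apply Hm2. apply Key; [exact Hm1|].
    exfalso. apply Hm2; auto.
Qed.

Definition Cof {T} (le : T -> T -> Prop) x0 (S : T -> Prop) :=
  (forall y, le y x0 -> S y) \/ exists z, lt le z x0 /\ forall y, le y x0 -> ~ le y z -> S y.

Lemma Cof_and {T} (le : T -> T -> Prop) (Ht : is_tree le) x0 S1 S2 :
  Cof le x0 S1 -> Cof le x0 S2 -> Cof le x0 (fun y => S1 y /\ S2 y).
Proof.
  pose proof Ht as [Rf [As [Tr _]]].
  intros [A|[z [Hz A]]] [B|[z' [Hz' B]]].
  - left; auto.
  - right; exists z'; split; auto.
  - right; exists z; split; auto.
  - destruct (comparable le Ht z z' x0 (proj1 Hz) (proj1 Hz')) as [h|h].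
    + right; exists z'; split; auto. intros y Hy Hn; split; auto.
      apply A; auto. intro c; apply Hn; eauto.
    + right; exists z; split; auto. intros y Hy Hn; split; auto.
      apply B; auto. intro c; apply Hn; eauto.
Qed.

Lemma Cof_list {T} (le : T -> T -> Prop) (Ht : is_tree le) (Hh : hausdorff_tree le) x0 l :
  Forall (sat le x0) l -> Cof le x0 (fun y => Forall (sat le y) l).
Proof.
  pose proof Ht as [Rf [As [Tr _]]].
  induction l as [|p l IH]; intros F.
  - left; auto.
  - inversion F; subst.
    assert (Cp : Cof le x0 (fun y => sat le y p)).
    { destruct p as [q [|]]; unfold sat in *; simpl in *.
      - left; eauto.
      - destruct (segment le Ht Hh x0 q H1) as [A|[z [Hz A]]].
        + left; auto.
        + right; exists z; split; auto. }
    destruct (Cof_and le Ht x0 _ _ Cp (IH H2)) as [A|[z [Hz A]]].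
    + left; intros y Hy; destruct (A y Hy); constructor; auto.
    + right; exists z; split; auto. intros y Hy Hn; destruct (A y Hy Hn); constructor; auto.
Qed.

Lemma seg_compact {T} (le : T -> T -> Prop) (Ht : is_tree le) (Hh : hausdorff_tree le) t :
  tcompact le (fun x => le x t).
Proof.
  pose proof Ht as [Rf [As [Tr _]]].
  intros I U HU Hcov.
  set (P := fun x => exists l : list I, forall y, le y x -> exists i, In i l /\ U i y).
  apply NNPP; intro NP.
  destruct (wo_min le Ht t (fun x => le x t /\ ~ P x)) as [x0 [[Hx0 NPx0] Hmin]].
  { intros x [h _]; auto. } { left; split; auto. }
  assert (Pbelow : forall y, lt le y x0 -> P y).
  { intros y [Hy1 Hy2]. apply NNPP; intro c. apply Hy2. apply As; auto.
    apply Hmin; split; eauto. }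
  destruct (Hcov x0 Hx0) as [i Hi].
  destruct (HU i x0 Hi) as [l0 [F0 G0]].
  destruct (Cof_list le Ht Hh x0 l0 F0) as [A|[z [Hz A]]].
  - apply NPx0. exists (i :: nil). intros y Hy. exists i; split; simpl; auto.
  - destruct (Pbelow z Hz) as [lz Hlz].
    apply NPx0. exists (i :: lz). intros y Hy.
    destruct (classic (le y z)) as [h|h].
    + destruct (Hlz y h) as [j [Hj1 Hj2]]. exists j; split; simpl; auto.
    + exists i; split; simpl; auto.
Qed.

Lemma ind_C0 {T} (le : T -> T -> Prop) (Ht : is_tree le) (Hh : hausdorff_tree le) t :
  C0 le (ind le t).
Proof.
  assert (Cs : pcont le (ind le t)).
  { intros x eps He.
    exists ((t, if excluded_middle_informative (le x t) then true else false) :: nil).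
    split.
    - constructor; auto. unfold sat; simpl.
      destruct (excluded_middle_informative (le x t)); simpl; auto.
    - intros y Hy. inversion Hy; subst. unfold sat in H1; simpl in H1.
      unfold ind.
      destruct (excluded_middle_informative (le x t));
      destruct (excluded_middle_informative (le y t)); simpl in *; try tauto;
      rewrite Rminus_diag, Rabs_R0; auto. }
  split. apply of_pcont; auto.
  intros eps He.
  apply (compact_sub le _ _ _ (seg_compact le Ht Hh t) (seg_compact le Ht Hh t)).
  - intros x Hx. left. unfold ind in Hx.
    destruct (excluded_middle_informative (le x t)); auto.
    rewrite Rabs_R0 in Hx; lra.
  - intros x Hx. destruct (pcont_open_lt le _ eps Cs x) as [l [A B]].
    + apply Rnot_ge_lt; auto.
    + exists l; split; auto. intros y Hy. specialize (B y Hy). lra.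
Qed.

Lemma N_zero {T} (le : T -> T -> Prop) N (Hn : is_norm_C0 le N) : N (fun _ => 0) = 0.
Proof.
  destruct Hn as [_ [_ [Nh _]]].
  pose proof (Nh 0 (fun _ => 0) (C0_zero le)) as E.
  replace (fun _ : T => 0 * 0) with (fun _ : T => 0) in E by (extensionality x; ring).
  rewrite Rabs_R0 in E. rewrite (Rmult_0_l (N (fun _ : T => 0))) in E. transitivity (N (fun _ : T => 0 * 0)); [f_equal; extensionality x; ring | exact E].
Qed.

Lemma mu_le_N {T} (le : T -> T -> Prop) N mu (Hmu : forall t, is_inf (mu_set le N t) (mu t)) t g :
  C0 le g -> (forall x, g x <> 0 -> lt le t x) -> mu t <= N (fun x => ind le t x + g x).
Proof.
  intros Cg Sg. destruct (Hmu t) as [L _]. apply L. exists g; auto.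
Qed.

Lemma mono {T} (le : T -> T -> Prop) (Ht : is_tree le) (Hh : hausdorff_tree le) N mu
  (Hmu : forall t, is_inf (mu_set le N t) (mu t)) s t : le s t -> mu s <= mu t.
Proof.
  pose proof Ht as [Rf [As [Tr _]]].
  intros Hst. destruct (Hmu t) as [_ G]. apply G. intros r [g [Cg [Sg ->]]].
  replace (fun x => ind le t x + g x) with
    (fun x => ind le s x + (ind le t x + -1 * ind le s x + g x)) by (extensionality x; ring).
  apply mu_le_N; auto.
  - apply C0_plus; auto. apply C0_plus. apply ind_C0; auto. apply C0_scal, ind_C0; auto.
  - intros x Hx. destruct (classic (g x = 0)) as [h|h].
    + rewrite h in Hx. unfold ind in Hx.
      destruct (excluded_middle_informative (le x t)) as [a|a];
      destruct (excluded_middle_informative (le x s)) as [b|b].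
      * lra.
      * destruct (comparable le Ht s x t Hst a) as [c|c]; [|tauto].
        split; auto. intros ->. apply b; auto.
      * exfalso; apply a; eauto.
      * lra.
    + destruct (Sg x h) as [h1 h2]. split; eauto.
      intros ->. apply h2. apply As; auto.
Qed.

Fixpoint GL {T} (le : T -> T -> Prop) (N : (T -> R) -> R) (t : T) (m : R)
  (L : list (T * (T -> R))) : Prop :=
  match L with
  | nil => True
  | p :: L' => succ le t (fst p) /\ C0 le (snd p) /\ (forall x, snd p x <> 0 -> lt le (fst p) x) /\
               N (fun x => ind le (fst p) x + snd p x) < m /\ ~ In (fst p) (map fst L') /\
               GL le N t m L'
  end.

Definition sumL {T} (le : T -> T -> Prop) (L : list (T * (T -> R))) (x : T) : R :=
  fold_right (fun p acc => ind le (fst p) x + snd p x + acc) 0 L.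

Definition hsum {T} (le : T -> T -> Prop) t (L : list (T * (T -> R))) (x : T) : R :=
  fold_right (fun p acc => (ind le (fst p) x + snd p x - ind le t x) + acc) 0 L.

Lemma sum_eq {T} (le : T -> T -> Prop) t L x :
  sumL le L x = hsum le t L x + INR (length L) * ind le t x.
Proof.
  induction L as [|p L IH]; simpl. ring.
  unfold sumL, hsum in *. simpl. rewrite IH. destruct (length L); simpl; ring.
Qed.

Lemma GL_succ {T} (le : T -> T -> Prop) N t m L u :
  GL le N t m L -> In u (map fst L) -> succ le t u.
Proof.
  induction L as [|p L IH]; simpl; [tauto|].
  intros (A & _ & _ & _ & _ & G) [E|E]; [subst; auto | auto].
Qed.

Lemma GL_forall {T} (le : T -> T -> Prop) N t m L :
  GL le N t m L -> Forall (succ le t) (map fst L).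
Proof.
  intros G. apply Forall_forall. intros u Hu. eapply GL_succ; eauto.
Qed.

Lemma sumL_prop {T} (le : T -> T -> Prop) (Ht : is_tree le) (Hh : hausdorff_tree le) N
  (Hn : is_norm_C0 le N) t m L :
  GL le N t m L -> C0 le (sumL le L) /\ N (sumL le L) <= INR (length L) * m.
Proof.
  pose proof Hn as [_ [_ [_ Nt]]].
  induction L as [|p L IH]; intros G.
  - unfold sumL; simpl. split. apply C0_zero. rewrite (N_zero le N Hn). lra.
  - destruct G as (A & Cg & Sg & Np & _ & G). destruct (IH G) as [C1 N1].
    assert (E : sumL le (p :: L) = fun x => (fun x => ind le (fst p) x + snd p x) x + sumL le L x).
    { extensionality x. reflexivity. }
    rewrite E. assert (Cp : C0 le (fun x => ind le (fst p) x + snd p x)).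
    { apply C0_plus; auto. apply ind_C0; auto. }
    split. apply C0_plus; auto.
    eapply Rle_trans. apply Nt; auto. simpl length. rewrite S_INR. lra.
Qed.

Lemma disjoint_cones {T} (le : T -> T -> Prop) (Ht : is_tree le) t u u' x :
  succ le t u -> succ le t u' -> le u x -> le u' x -> u <> u' -> False.
Proof.
  pose proof Ht as [Rf [As [Tr _]]].
  intros Su Su' Hu Hu' D.
  assert (Ltu : forall v, succ le t v -> lt le t v) by (intros v Sv; apply Sv; auto).
  destruct (comparable le Ht u u' x Hu Hu') as [c|c].
  - assert (lt le u u') by (split; auto). apply Su' in H.
    destruct (Ltu u Su) as [h1 h2]. apply h2. apply As; auto.
  - assert (lt le u' u) by (split; auto). apply Su in H.
    destruct (Ltu u' Su') as [h1 h2]. apply h2. apply As; auto.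
Qed.

Lemma h_supp {T} (le : T -> T -> Prop) (Ht : is_tree le) t u (g : T -> R) x :
  succ le t u -> (forall x, g x <> 0 -> lt le u x) ->
  ind le u x + g x - ind le t x <> 0 -> le u x.
Proof.
  pose proof Ht as [Rf [As [Tr _]]].
  intros Su Sg H. destruct (classic (g x = 0)) as [h|h].
  - rewrite h in H. unfold ind in H.
    destruct (excluded_middle_informative (le x u)) as [a|a];
    destruct (excluded_middle_informative (le x t)) as [b|b]; try lra.
    + destruct (classic (x = u)) as [->|ne]; auto.
      exfalso. apply b. apply Su. split; auto.
    + exfalso. apply a. apply Su in b. apply b.
  - apply Sg; auto.
Qed.

Lemma hsum_zero {T} (le : T -> T -> Prop) (Ht : is_tree le) N t m L x :
  GL le N t m L -> (forall u, In u (map fst L) -> ~ le u x) -> hsum le t L x = 0.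
Proof.
  induction L as [|p L IH]; simpl; intros G H. reflexivity.
  destruct G as (A & Cg & Sg & Np & _ & G).
  unfold hsum in *; simpl. rewrite IH; auto.
  destruct (classic (ind le (fst p) x + snd p x - ind le t x = 0)) as [e|e].
  rewrite e; ring.
  exfalso. apply (H (fst p)); auto. eapply h_supp; eauto.
Qed.

Lemma hsum_bound {T} (le : T -> T -> Prop) (Ht : is_tree le) (Hh : hausdorff_tree le) N
  (Hn : is_norm_C0 le N) a (Ha : 0 < a)
  (Heq : forall f, C0 le f -> forall t, a * Rabs (f t) <= N f) t m L x :
  0 <= m -> GL le N t m L -> Rabs (hsum le t L x) <= m / a.
Proof.
  pose proof Ht as [Rf [As [Tr _]]].
  intros Hm. induction L as [|p L IH]; intros G.
  - unfold hsum; simpl. rewrite Rabs_R0. unfold Rdiv; apply Rmult_le_pos; [lra | left; apply Rinv_0_lt_compat; lra].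
  - destruct G as (A & Cg & Sg & Np & NI & G).
    change (hsum le t (p :: L) x) with
      ((ind le (fst p) x + snd p x - ind le t x) + hsum le t L x).
    destruct (classic (le (fst p) x)) as [h|h].
    + rewrite (hsum_zero le Ht N t m L x G).
      2:{ intros u Hu Hux. apply (disjoint_cones le Ht t (fst p) u x A (GL_succ le N t m L u G Hu) h Hux).
          intros E; rewrite E in NI; auto. }
      assert (I0 : ind le t x = 0).
      { unfold ind. destruct (excluded_middle_informative (le x t)) as [c|c]; auto.
        exfalso. destruct (A t) as [_ c2]. specialize (c2 (Rf t)). destruct c2 as [c3 c4].
        apply c4. apply As; eauto. }
      rewrite I0, Rminus_0_r, Rplus_0_r.
      assert (Cp : C0 le (fun y => ind le (fst p) y + snd p y)).
      { apply C0_plus; auto. apply ind_C0; auto. }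
      pose proof (Heq _ Cp x) as E. simpl in E.
      apply Rmult_le_reg_l with a; auto.
      replace (a * (m / a)) with m by (field; lra). lra.
    + assert (Z : ind le (fst p) x + snd p x - ind le t x = 0).
      { apply NNPP; intro c. apply h. eapply h_supp; eauto. }
      rewrite Z, Rplus_0_l. apply IH; auto.
Qed.

Lemma build {T} (le : T -> T -> Prop) N mu (Hmu : forall t, is_inf (mu_set le N t) (mu t)) t m :
  bad le mu t -> mu t < m -> forall n, exists L, GL le N t m L /\ length L = n.
Proof.
  intros Hb Hm n. induction n as [|n [L [G E]]].
  - exists nil; simpl; auto.
  - assert (U : exists u, succ le t u /\ ~ In u (map fst L) /\ mu u < m).
    { apply NNPP; intro c. apply Hb. exists (map fst L). split. eapply GL_forall; eauto.
      exists m; split; auto. intros u Su NIu. apply Rnot_lt_le; intro. apply c; eauto. }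
    destruct U as [u [Su [NIu Mu]]].
    assert (Gx : exists g, C0 le g /\ (forall x, g x <> 0 -> lt le u x) /\
                           N (fun x => ind le u x + g x) < m).
    { apply NNPP; intro c. assert (m <= mu u).
      { destruct (Hmu u) as [_ G']. apply G'. intros r [g [Cg [Sg ->]]].
        apply Rnot_lt_le; intro. apply c; eauto. }
      lra. }
    destruct Gx as [g [Cg [Sg Ng]]].
    exists ((u, g) :: L). simpl. rewrite E. split; [exact (conj Su (conj Cg (conj Sg (conj Ng (conj NIu G))))) | reflexivity].
Qed.

Lemma badA {T} (le : T -> T -> Prop) (Ht : is_tree le) (Hh : hausdorff_tree le) N
  (Hn : is_norm_C0 le N) (He : equiv_sup_norm le N) mu
  (Hmu : forall t, is_inf (mu_set le N t) (mu t)) t :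
  bad le mu t -> N (ind le t) <= mu t.
Proof.
  intros Hb. pose proof Hn as [N0 [_ [Nh Nt]]].
  destruct He as [a [b [Ha [Hb' Heq]]]].
  apply Rnot_lt_le; intro Hlt.
  set (d := N (ind le t) - mu t).
  set (m := mu t + d / 2).
  assert (Hm0 : 0 <= m).
  { assert (0 <= mu t).
    { destruct (Hmu t) as [_ G]. apply G. intros r [g [Cg [Sg ->]]].
      apply N0. apply C0_plus; auto. apply ind_C0; auto. }
    unfold m, d. lra. }
  set (C := m / a).
  assert (HC : 0 <= C) by (unfold C, Rdiv; apply Rmult_le_pos; [lra | left; apply Rinv_0_lt_compat; lra]).
  destruct (INR_unbounded (Rmax 1 (2 * b * C / d))) as [n Hn'].
  assert (Hd : 0 < d) by (unfold d; lra).
  set (k := INR n).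
  assert (Hk : 0 < k) by (pose proof (Rmax_l 1 (2 * b * C / d)); unfold k; lra).
  assert (Hk2 : 2 * b * C / d < k) by (pose proof (Rmax_r 1 (2 * b * C / d)); unfold k; lra).
  destruct (build le N mu Hmu t m Hb ltac:(unfold m; lra) n) as [L [G EL]].
  destruct (sumL_prop le Ht Hh N Hn t m L G) as [CS NS].
  rewrite EL in NS. fold k in NS.
  set (S := sumL le L).
  set (H := fun x => / k * S x + -1 * ind le t x).
  assert (CH : C0 le H).
  { apply C0_plus; apply C0_scal; auto. apply ind_C0; auto. }
  assert (HH : forall x, Rabs (H x) <= C / k).
  { intros x. unfold H, S. rewrite (sum_eq le t L x), EL. fold k.
    replace (/ k * (hsum le t L x + k * ind le t x) + -1 * ind le t x) with (/ k * hsum le t L x)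
      by (field; lra).
    rewrite Rabs_mult, Rabs_right by (left; apply Rinv_0_lt_compat; lra).
    pose proof (hsum_bound le Ht Hh N Hn a Ha (fun f Cf => proj1 (Heq f Cf)) t m L x Hm0 G).
    unfold C. unfold Rdiv. rewrite (Rmult_comm (m * / a)).
    apply Rmult_le_compat_l; auto. left; apply Rinv_0_lt_compat; lra. }
  assert (NH : N H <= b * (C / k)) by (apply (proj2 (Heq H CH)); auto).
  assert (E : ind le t = fun x => (fun x => / k * S x) x + (fun x => -1 * H x) x).
  { extensionality x. unfold H. field. lra. }
  assert (T1 : N (ind le t) <= N (fun x => / k * S x) + N (fun x => -1 * H x)).
  { rewrite E at 1. apply Nt; apply C0_scal; auto. }
  rewrite (Nh _ _ CS), (Nh _ _ CH) in T1.
  rewrite Rabs_right in T1 by (left; apply Rinv_0_lt_compat; lra).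
  replace (Rabs (-1)) with 1 in T1 by (unfold Rabs; destruct (Rcase_abs (-1)); lra).
  assert (A1 : / k * N S <= m).
  { apply Rmult_le_reg_l with k; auto. rewrite <- Rmult_assoc, Rinv_r by lra. unfold S; lra. }
  assert (A2 : b * (C / k) < d / 2).
  { apply Rmult_lt_reg_l with (2 * k / d). unfold Rdiv; apply Rmult_lt_0_compat; [lra|]. apply Rinv_0_lt_compat; lra.
    replace (2 * k / d * (b * (C / k))) with (2 * b * C / d) by (field; lra).
    replace (2 * k / d * (d / 2)) with k by (field; lra). lra. }
  unfold S in *. clear E. unfold m, d in *. lra.
Qed.

Theorem proposition3p3 (T : Type) (le : T -> T -> Prop)
  (Htree : is_tree le) (Hhaus : hausdorff_tree le)
  (N : (T -> R) -> R)
  (Hnorm : is_norm_C0 le N) (Hequiv : equiv_sup_norm le N)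
  (Hsc : strictly_convex le N)
  (mu : T -> R) (Hmu : forall t, is_inf (mu_set le N t) (mu t)) :
  (forall s t1 t2,
     le s t1 -> le s t2 -> bad le mu t1 -> bad le mu t2 ->
     mu t1 = mu s -> mu t2 = mu s -> t1 = t2) /\
  (forall s t, bad le mu s -> bad le mu t -> lt le s t -> mu s < mu t).
Proof.
  pose proof Htree as [Rf [As [Tr _]]].
  pose proof Hnorm as [N0 [_ [Nh Nt]]].
  assert (NI : forall t, bad le mu t -> N (ind le t) = mu t).
  { intros t Bt. apply Rle_antisym. apply (badA le Htree Hhaus N Hnorm Hequiv mu Hmu t Bt).
    replace (N (ind le t)) with (N (fun x => ind le t x + 0)).
    apply mu_le_N; auto. apply C0_zero. intros x c; lra.
    f_equal. extensionality x. ring. }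
  assert (P1 : forall s t1 t2,
     le s t1 -> le s t2 -> bad le mu t1 -> bad le mu t2 ->
     mu t1 = mu s -> mu t2 = mu s -> t1 = t2).
  { intros s t1 t2 H1 H2 B1 B2 E1 E2.
    pose proof (NI t1 B1) as F1. pose proof (NI t2 B2) as F2.
    assert (C1 : C0 le (ind le t1)) by (apply ind_C0; auto).
    assert (C2 : C0 le (ind le t2)) by (apply ind_C0; auto).
    assert (Cs : C0 le (fun x => ind le t1 x + ind le t2 x)) by (apply C0_plus; auto).
    assert (Up : N (fun x => ind le t1 x + ind le t2 x) <= 2 * mu s).
    { eapply Rle_trans. apply Nt; auto. lra. }
    assert (Lo : mu s <= / 2 * N (fun x => ind le t1 x + ind le t2 x)).
    { replace (/ 2 * N (fun x => ind le t1 x + ind le t2 x)) with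
        (N (fun x => ind le s x + (/ 2 * (ind le t1 x + ind le t2 x) + -1 * ind le s x))).
      2:{ transitivity (Rabs (/ 2) * N (fun x => ind le t1 x + ind le t2 x)).
          - rewrite <- Nh by auto. f_equal. extensionality x. simpl. ring.
          - rewrite Rabs_right; lra. }
      apply mu_le_N; auto.
      - apply C0_plus. apply C0_scal; auto. apply C0_scal, ind_C0; auto.
      - intros x Hx. unfold ind in Hx.
        destruct (excluded_middle_informative (le x s)) as [c|c].
        + destruct (excluded_middle_informative (le x t1)) as [d1|d1]; [|exfalso; eauto].
          destruct (excluded_middle_informative (le x t2)) as [d2|d2]; [|exfalso; eauto].
          lra.
        + destruct (excluded_middle_informative (le x t1)) as [d1|d1].
          * destruct (comparable le Htree s x t1 H1 d1) as [e|e]; [|tauto].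
            split; auto. intros ->; auto.
          * destruct (excluded_middle_informative (le x t2)) as [d2|d2].
            -- destruct (comparable le Htree s x t2 H2 d2) as [e|e]; [|tauto].
               split; auto. intros ->; auto.
            -- lra. }
    assert (Eq : forall x, ind le t1 x = ind le t2 x).
    { apply Hsc; auto; lra. }
    pose proof (Eq t1) as G1. pose proof (Eq t2) as G2. unfold ind in G1, G2.
    destruct (excluded_middle_informative (le t1 t1)) as [a|a]; [|exfalso; apply a; apply Rf].
    destruct (excluded_middle_informative (le t2 t2)) as [a'|a']; [|exfalso; apply a'; apply Rf].
    destruct (excluded_middle_informative (le t1 t2)) as [b|b]; [|lra].
    destruct (excluded_middle_informative (le t2 t1)) as [c|c]; [|lra].
    apply As; auto. }
  split; auto.
  intros s t Bs Bt [Hst Hne].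
  destruct (Rle_lt_or_eq_dec _ _ (mono le Htree Hhaus N mu Hmu s t Hst)) as [h|h]; auto.
  exfalso. apply Hne. apply (P1 s s t); auto.
Qed.
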